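(* Let $n=p_1^{\alpha_1}\cdots p_r^{\alpha_r}$ be the canonical factorization of $n$ into distinct primes and let $d=p_1^{\beta_1}\cdots p_r^{\beta_r}$ be a square-free divisor of $n$ (i.e. $0\le\beta_\ell\le1$ for all $\ell$). Then $c_d(k)\neq0$ for every divisor $k$ of $n$, and for $s=0,1,2,\dots$, $$\sum_{k\mid n}\frac{1}{\big(c_d(k)\big)^s}=\prod_{\ell=1}^r\Big(\frac{\alpha_\ell}{(p_\ell-1)^{\beta_\ell s}}+(-1)^{\beta_\ell s}\Big).$$
   Context: For integers $m\ge1$ and $x$, $c_m(x)=\sum_{1\le j\le m,\ (j,m)=1}e^{2\pi ijx/m}$ is the Ramanujan sum; the sum is over positive divisors $k$ of $n$. *)

(* Defs.v *)
From Stdlib Require Import Reals.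
From HB Require Import structures.
From mathcomp Require Import all_boot all_order all_algebra.
From mathcomp Require Import complex.
From mathcomp Require Import Rstruct.
Set Implicit Arguments. Unset Strict Implicit. Unset Printing Implicit Defensive.
Import Order.TTheory GRing.Theory Num.Theory.
Local Open Scope ring_scope.
Local Open Scope complex_scope.

Definition expi (t : R) : R[i] := (Rtrigo_def.cos t +i* Rtrigo_def.sin t)%C.

Definition ramanujan_sum (m : nat) (x : int) : R[i] :=
  \sum_(1 <= j < m.+1 | coprime j m)
     expi (2 * PI * ((j%:R * x%:~R) / m%:R)).

(* Main.v *)
Require Import Defs.
From Stdlib Require Import Rdefinitions Raxioms RIneq Rtrigo1 Rtrigo_def Lra.
From HB Require Import structures.
From mathcomp Require Import all_boot all_order all_algebra.
From mathcomp Require Import complex Rstruct.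
From mathcomp Require Import ring.
Import Order.TTheory GRing.Theory Num.Theory.
Lemma divisors_coprime a b : (0 < a)%N -> (0 < b)%N -> coprime a b ->
  perm_eq (divisors (a * b)) [seq x * y | x <- divisors a, y <- divisors b].
Proof.
move=> a0 b0 cab.
have ab0 : (0 < a * b)%N by rewrite muln_gt0 a0.
apply: uniq_perm; first exact: divisors_uniq.
  apply: allpairs_uniq; [exact: divisors_uniq | exact: divisors_uniq |].
  move=> [x y] [x' y'] /allpairsP[[x1 y1] /= [hx hy [-> ->]]].
  move=> /allpairsP[[x2 y2] /= [hx' hy' [-> ->]]] /= e.
  move: hx hy hx'  hy'; rewrite -!dvdn_divisors // => hx hy hx' hy'.
  have g1 : forall u v, (u %| a)%N -> (v %| b)%N -> gcdn a (u * v) = u.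
    move=> u v ua vb; rewrite Gauss_gcdl; last exact: (coprime_dvdr vb).
    exact/gcdn_idPr.
  have g2 : forall u v, (u %| a)%N -> (v %| b)%N -> gcdn b (u * v) = v.
    move=> u v ua vb; rewrite Gauss_gcdr; last by apply: (coprime_dvdr ua); rewrite coprime_sym.
    exact/gcdn_idPr.
  have ex : x1 = x2 by rewrite -(g1 x1 y1) // e g1.
  have ey : y1 = y2 by rewrite -(g2 x1 y1) // e g2.
  by rewrite ex ey.
move=> k; rewrite -dvdn_divisors //; apply/idP/allpairsP => [kab|[[x y] /= [hx hy ->]]].
  exists (gcdn k a, gcdn k b); rewrite /= -!dvdn_divisors // !dvdn_gcdr; split=> //.
  apply/eqP; rewrite eqn_dvd; apply/andP; split.
    rewrite muln_gcdl dvdn_gcd dvdn_mulr //= muln_gcdr dvdn_gcd kab andbT. exact: dvdn_mull.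
  rewrite Gauss_dvd ?dvdn_gcdl //.
  exact: (coprime_dvdl (dvdn_gcdr _ _) (coprime_dvdr (dvdn_gcdr _ _) cab)).
by move: hx hy; rewrite -!dvdn_divisors // => hx hy; apply: dvdn_mul.
Qed.

Lemma divisors_pfactor p a : prime p ->
  perm_eq (divisors (p ^ a)) [seq p ^ e | e <- iota 0 a.+1].
Proof.
move=> pp; apply: uniq_perm; first exact: divisors_uniq.
  rewrite map_inj_uniq ?iota_uniq //; exact: expnI (prime_gt1 pp).
move=> k; rewrite -dvdn_divisors ?expn_gt0 ?prime_gt0 //.
apply/(dvdn_pfactor _ _ pp)/mapP => [[e ea ->]|[e ea ->]]; exists e => //.
  by rewrite mem_iota add0n ltnS.
by move: ea; rewrite mem_iota add0n ltnS.
Qed.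

Lemma sum_divisors_prod (R : comRingType) (h : nat -> nat -> R) n : (0 < n)%N ->
  (\sum_(k <- divisors n) \prod_(q <- primes n) h q (logn q k) =
  \prod_(q <- primes n) \sum_(e < (logn q n).+1) h q e)%R.
Proof.
elim: n {-2}n (leqnn n) => [|N IHN] n; first by rewrite leqn0 => /eqP->.
move=> nN n0.
have [n1|n1] := leqP n 1.
  have -> : n = 1%N by apply/eqP; rewrite eqn_leq n1.
  by rewrite /= big_cons !big_nil addr0.
set p := pdiv n.
have pp : prime p by apply: pdiv_prime.
have pn : p \in primes n by rewrite mem_primes pp n0 pdiv_dvd.
set a := logn p n.
have a0 : (0 < a)%N by rewrite /a logn_gt0.
have [m cpm en] := pfactor_coprime pp n0.
rewrite -/a in en.
have m0 : (0 < m)%N by move: n0; rewrite en muln_gt0 => /andP[].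
have pa1 : (1 < p ^ a)%N by rewrite -{1}(expn0 p) ltn_exp2l ?prime_gt1.
have mlt : (m < n)%N by rewrite en -{1}[m]muln1 ltn_pmul2l.
have pnm : ~~ (p %| m)%N by rewrite -prime_coprime.
have hperm : perm_eq (primes n) (p :: primes m).
  apply: uniq_perm; first exact: primes_uniq.
    by rewrite /= primes_uniq andbT mem_primes (negbTE pnm) !andbF.
  move=> q; rewrite en primesM //; last by rewrite expn_gt0 prime_gt0.
  rewrite primesX // (primes_prime pp).
  by rewrite !inE orbC.
have lq : forall q, q \in primes m -> forall e y, (0 < y)%N -> logn q (p ^ e * y) = logn q y.
  move=> q qm e y y0; rewrite lognM ?expn_gt0 ?(prime_gt0 pp) // lognX logn_prime //.
  have -> : (q == p) = false; last by rewrite muln0.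
  by apply/negbTE/eqP => qp; move: qm; rewrite qp mem_primes (negbTE pnm) !andbF.
have lqn : forall q, q \in primes m -> logn q n = logn q m.
  by move=> q qm; rewrite en mulnC lq.
rewrite !(perm_big _ hperm) /= big_cons.
have hd : perm_eq (divisors n) [seq x * y | x <- divisors (p ^ a), y <- divisors m].
  rewrite en mulnC; apply: divisors_coprime => //; first by rewrite expn_gt0 prime_gt0.
  by rewrite coprime_pexpl.
rewrite (perm_big _ hd) big_allpairs_dep (perm_big _ (divisors_pfactor _ a pp)) big_map.
rewrite [X in _ = (_ * X)%R](eq_big_seq (fun q => \sum_(e < (logn q m).+1) h q e)%R); last first.
  by move=> q qm; rewrite lqn.
rewrite -(IHN m (leq_trans mlt nN)) // mulr_suml -/a.
rewrite -[iota 0 a.+1]/(index_iota 0 a.+1) big_mkord.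
apply: eq_bigr => e _; rewrite mulr_sumr; apply: eq_big_seq => y.
rewrite -dvdn_divisors // => ym.
have y0 : (0 < y)%N by apply: dvdn_gt0 ym.
rewrite (perm_big _ hperm) big_cons /=.
rewrite lognM ?expn_gt0 ?(prime_gt0 pp) // pfactorK // logn_coprime ?addn0; last first.
  exact: coprime_dvdr ym cpm.
congr (_ * _)%R; apply: eq_big_seq => q qm.
by rewrite lq.
Qed.

Local Open Scope ring_scope.

Lemma expiD (a b : R) : expi (a + b) = expi a * expi b.
Proof.
rewrite /expi /=; congr Complex.
  by rewrite cos_plus.
by rewrite sin_plus addrC.
Qed.
Lemma expi0 : expi 0 = 1.
Proof. by rewrite /expi cos_0 sin_0. Qed.
Lemma expiMn (n : nat) (a : R) : expi (GRing.mul n%:R a) = expi a ^+ n.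
Proof.
elim: n => [|n IH]; first by rewrite mulr0n mul0r expr0 expi0.
by rewrite -addn1 natrD mulrDl mul1r expiD IH exprD expr1.
Qed.

Definition tau : R := Rmult (IZR (Zpos 2)) PI.
Definition zeta (x : R) : R[i] := expi (GRing.mul tau x).

Lemma zetaD x y : zeta (x + y) = zeta x * zeta y.
Proof. by rewrite /zeta mulrDr expiD. Qed.
Lemma zetaMn n x : zeta (GRing.mul n%:R x) = zeta x ^+ n.
Proof. by rewrite /zeta mulrCA expiMn. Qed.
Lemma zeta1 : zeta 1 = 1.
Proof. by rewrite /zeta mulr1 /expi /tau cos_2PI sin_2PI. Qed.
Lemma zeta_nat n : zeta n%:R = 1.
Proof. by rewrite -[n%:R]mulr1 zetaMn zeta1 expr1n. Qed.
Lemma zeta0 : zeta 0 = 1.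
Proof. by rewrite /zeta mulr0 expi0. Qed.

Lemma zeta_frac_ne1 r q : (0 < r)%N -> (r < q)%N -> zeta (r%:R / q%:R) != 1.
Proof.
move=> r0 rq; apply/eqP => /(congr1 (@complex.Re R)); rewrite /zeta /expi /= /tau.
set y := (r%:R / q%:R : R).
have y0 : Rlt 0 y by apply/RltP; rewrite divr_gt0 // ltr0n // (leq_trans r0 (ltnW rq)).
have y1 : Rlt y 1.
  apply/RltP; rewrite ltr_pdivrMr ?ltr0n ?(leq_trans r0 (ltnW rq)) // mul1r ltr_nat //.
rewrite (_ : GRing.mul (Rmult (IZR (Zpos 2)) PI) y = Rmult (IZR (Zpos 2)) (Rmult PI y)); last by rewrite -Rmult_assoc.
rewrite cos_2a_sin => h.
have s0 : Rlt 0 (sin (Rmult PI y)).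
  apply: sin_gt_0; first by apply: Rmult_lt_0_compat => //; apply: PI_RGT_0.
  have := PI_RGT_0; nra.
have h2 : Rminus (IZR (Zpos xH)) (Rmult (Rmult (IZR (Zpos (xO xH))) (sin (Rmult PI y))) (sin (Rmult PI y))) = IZR (Zpos xH) by exact: h.
nra.
Qed.
Definition Tsum (m : nat) (z : R[i]) : R[i] := \sum_(0 <= j < m | coprime j m) z ^+ j.

Lemma Tsum_block (c m : nat) (z : R[i]) :
  \sum_(0 <= j < c * m | coprime j m) z ^+ j = (\sum_(i < c) z ^+ (i * m)) * Tsum m z.
Proof.
elim: c => [|c IH]; first by rewrite mul0n big_geq // big_ord0 mul0r.
rewrite mulSnr (@big_cat_nat _ _ _ (c * m)%N) //= ?leq_addr // IH.
rewrite -{1}[(c * m)%N]add0n big_addn addKn big_ord_recr /= mulrDl; congr (_ + _).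
rewrite /Tsum mulr_sumr.
under eq_bigl => j do rewrite -coprime_modl addnC modnMDl coprime_modl.
by apply: eq_bigr => j _; rewrite exprD mulrC.
Qed.

Lemma Tsum_mults (p c : nat) (g : nat -> R[i]) (P : pred nat) : (0 < p)%N ->
  \sum_(0 <= j < p * c | P j && (p %| j)%N) g j = \sum_(0 <= t < c | P (p * t)%N) g (p * t)%N.
Proof.
move=> p0; elim: c => [|c IH]; first by rewrite muln0 !big_geq.
rewrite mulnSr (@big_cat_nat _ _ _ (p * c)%N) //= ?leq_addr // IH.
rewrite [in RHS]big_mkcond big_nat_recr //= -big_mkcond; congr (_ + _).
rewrite -{1}[(p * c)%N]add0n big_addn addKn big_mkcond big_ltn // add0n dvdn_mulr // andbT.
rewrite big_nat_cond big1; first by rewrite /= addr0.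
move=> i /andP[/andP[i1 ip] _].
rewrite dvdn_addl ?dvdn_mulr // andbC.
have -> : (p %| i)%N = false; last by [].
apply/negbTE/negP => /(dvdn_leq (leq_trans (isT : (0 < 1)%N) i1)); by rewrite leqNgt ip.
Qed.

Lemma Tsum_rec p m (z : R[i]) : prime p -> ~~ (p %| m)%N -> (0 < m)%N ->
  Tsum (p * m) z = (\sum_(i < p) (z ^+ m) ^+ i) * Tsum m z - Tsum m (z ^+ p).
Proof.
move=> pp npm m0.
have cpm : coprime p m by rewrite prime_coprime.
rewrite /Tsum.
have -> : \sum_(0 <= j < p * m | coprime j (p * m)) z ^+ j =
   \sum_(0 <= j < p * m | coprime j m) z ^+ j -
   \sum_(0 <= j < p * m | coprime j m && (p %| j)%N) z ^+ j.
  rewrite [X in _ = X - _]big_mkcond [X in _ = _ - X]big_mkcond -sumrB big_mkcond.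
  apply: eq_bigr => j _; rewrite coprimeMr [coprime j p]coprime_sym prime_coprime //.
  by case: (coprime j m); case: (p %| j)%N; rewrite ?subrr ?subr0.
rewrite Tsum_mults ?prime_gt0 // Tsum_block; congr (_ * _ - _).
  by apply: eq_bigr => i _; rewrite -exprM mulnC.
under eq_bigl do rewrite coprimeMl cpm /=.
by apply: eq_bigr => t _; rewrite exprM.
Qed.

Lemma expr_gcd (z : R[i]) a b : (0 < a)%N -> z ^+ a = 1 -> z ^+ b = 1 -> z ^+ gcdn a b = 1.
Proof.
move=> a0 za zb; case: (@Bezoutl a b a0) => u _ /dvdnP[k Hk].
have : z ^+ (gcdn a b + u * b) = 1 by rewrite Hk mulnC exprM za expr1n.
by rewrite exprD mulnC exprM zb expr1n mulr1.
Qed.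

Lemma Tsum_val m : (0 < m)%N -> (forall q, (logn q m <= 1)%N) -> forall z : R[i], z ^+ m = 1 ->
  Tsum m z = \prod_(q <- primes m) (if z ^+ (m %/ q) == 1 then (q - 1)%:R else -1).
Proof.
elim: m {-2}m (leqnn m) => [|N IHN] m; first by rewrite leqn0 => /eqP->.
move=> mN m0 sqf z zm.
have [m1|m1] := leqP m 1.
  have -> : m = 1%N by apply/eqP; rewrite eqn_leq m1.
  by rewrite /Tsum big_mkcond big_nat1 /= big_nil expr0.
set p := pdiv m; set m' := (m %/ p)%N.
have pp : prime p by apply: pdiv_prime.
have p0 : (0 < p)%N by apply: prime_gt0.
have em : m = (p * m')%N by rewrite /m' mulnC divnK // pdiv_dvd.
have m'0 : (0 < m')%N by move: m0; rewrite em muln_gt0 => /andP[].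
have m'lt : (m' < m)%N by rewrite /m' ltn_Pdiv // prime_gt1.
have npm : ~~ (p %| m')%N.
  apply/negP => pm.
  have := sqf p; rewrite em lognM // logn_prime // eqxx add1n ltnS leqn0 => /eqP.
  by move/eqP; rewrite eqn0Ngt logn_gt0 mem_primes pp m'0 pm.
have sqf' : forall q, (logn q m' <= 1)%N.
  move=> q; apply: leq_trans (sqf q); apply: dvdn_leq_log => //.
  by rewrite em dvdn_mull.
have hperm : perm_eq (primes m) (p :: primes m').
  apply: uniq_perm; first exact: primes_uniq.
    by rewrite /= primes_uniq andbT mem_primes (negbTE npm) !andbF.
  by move=> q; rewrite em primesM // primes_prime // !inE.
rewrite (perm_big _ hperm) /= big_cons.
have divq : forall q, q \in primes m' -> (m %/ q = p * (m' %/ q))%N.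
  move=> q; rewrite mem_primes => /and3P[_ _ qm].
  by rewrite em muln_divA.
have -> : (m %/ p)%N = m' by [].
rewrite em Tsum_rec //.
have zm' : (z ^+ p) ^+ m' = 1 by rewrite -exprM -em.
have IH2 := IHN m' (leq_trans (leq_trans m'lt mN) (leqnn _)) m'0 sqf' _ zm'.
rewrite IH2.
rewrite [in RHS](eq_big_seq (fun j => if (z ^+ p) ^+ (m' %/ j) == 1 then (j - 1)%:R else -1)); last first.
  by move=> q; rewrite mem_primes => /and3P[_ _ qm]; rewrite /= -muln_divA // exprM.
have zpm : (z ^+ m') ^+ p = 1 by rewrite -exprM mulnC -em.
case: ifP => zm'1.
  have IH1 := IHN m' (leq_trans (leq_trans m'lt mN) (leqnn _)) m'0 sqf' _ (eqP zm'1).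
  rewrite IH1.
  have -> : \sum_(i < p) (z ^+ m') ^+ i = p%:R.
    by rewrite (eqP zm'1); under eq_bigr do rewrite expr1n; rewrite sumr_const card_ord.
  rewrite [X in _ * X - _](eq_big_seq (fun j => if (z ^+ p) ^+ (m' %/ j) == 1 then (j - 1)%:R else -1)); last first.
    move=> q; rewrite mem_primes => /and3P[_ _ qm] /=.
    have -> : (z ^+ (m' %/ q) == 1) = ((z ^+ p) ^+ (m' %/ q) == 1); last by [].
    apply/eqP/eqP => [H|H]; first by rewrite exprAC H expr1n.
    have : z ^+ gcdn m' (p * (m' %/ q)) = 1.
      by apply: expr_gcd => //; [apply/eqP | rewrite exprM].
    rewrite Gauss_gcdr; last by rewrite coprime_sym prime_coprime.
    by move/gcdn_idPr: (dvdn_div qm) => ->.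
  by rewrite natrB ?prime_gt0 // mulrBl mul1r mulr_natl.
have S0 : \sum_(i < p) (z ^+ m') ^+ i = 0.
  have := subrX1 (z ^+ m') p; rewrite zpm subrr => /esym/eqP.
  by rewrite mulf_eq0 subr_eq0 zm'1 /= => /eqP.
by rewrite S0 mul0r sub0r mulN1r.
Qed.

Lemma zeta_pow m (k : nat) : (0 < m)%N -> zeta (k%:R / m%:R) ^+ m = 1.
Proof.
move=> m0; rewrite -zetaMn mulrC divfK ?zeta_nat //.
by rewrite pnatr_eq0 -lt0n.
Qed.

Lemma ram_Tsum m (k : nat) : (0 < m)%N -> ramanujan_sum m k = Tsum m (zeta (k%:R / m%:R)).
Proof.
move=> m0; rewrite /ramanujan_sum /Tsum.
set z := zeta _.
have zm : z ^+ m = 1 by exact: zeta_pow.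
have -> : \sum_(1 <= j < m.+1 | coprime j m)
     expi (2 * PI * ((j%:R * (k%:Z)%:~R) / m%:R)) = \sum_(1 <= j < m.+1 | coprime j m) z ^+ j.
  apply: eq_bigr => j _; rewrite -zetaMn /zeta.
  congr expi; rewrite RmultE RdivE RmultE /tau.
  by rewrite !RmultE [X in _ = _ * X]mulrA.
by rewrite big_mkcond big_nat_recr //= [RHS]big_mkcond [RHS](big_ltn m0) /= /coprime gcdnn gcd0n expr0 zm addrC.
Qed.

Lemma zeta_div m (k q : nat) : (0 < m)%N -> prime q -> (q %| m)%N ->
  (zeta (k%:R / m%:R) ^+ (m %/ q) == 1) = (q %| k)%N.
Proof.
move=> m0 pq qm.
have q0 : (q%:R : R) != 0 by rewrite pnatr_eq0 -lt0n prime_gt0.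
have m0' : (m%:R : R) != 0 by rewrite pnatr_eq0 -lt0n.
rewrite -zetaMn natr_div ?unitfE //.
have e : GRing.mul (m%:R / q%:R) (k%:R / m%:R) = (k%:R / q%:R : R).
  by rewrite !RdivE mulrC -mulrA mulKf.
rewrite e RdivE.
rewrite {1}(divn_eq k q) natrD natrM mulrDl mulfK // zetaD zeta_nat mul1r /dvdn.
have [->|r0] := posnP (k %% q); first by rewrite mul0r zeta0 eqxx.
by rewrite (negbTE (zeta_frac_ne1 _ _ r0 (ltn_pmod _ (prime_gt0 pq)))).
Qed.

Lemma ram_val d (k : nat) : (0 < d)%N -> (forall p, (logn p d <= 1)%N) ->
  ramanujan_sum d k = \prod_(q <- primes d) (if (q %| k)%N then (q - 1)%:R else -1).
Proof.
move=> d0 sqf; rewrite ram_Tsum // Tsum_val //; last exact: zeta_pow.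
apply: eq_big_seq => q; rewrite mem_primes => /and3P[pq _ qd].
by rewrite zeta_div.
Qed.

Theorem mainTheorem9 (n d : nat) :
  (0 < n)%N -> (d %| n)%N -> (forall p : nat, (logn p d <= 1)%N) ->
  (forall k : nat, (k %| n)%N -> ramanujan_sum d k != 0) /\
  (forall s : nat,
     \sum_(k <- divisors n) (ramanujan_sum d k ^+ s)^-1 =
     \prod_(p <- primes n)
        ((logn p n)%:R / ((p - 1)%:R ^+ (logn p d * s))
         + (-1) ^+ (logn p d * s)) :> R[i]).
Proof.
move=> n0 dn sqf.
have d0 : (0 < d)%N := dvdn_gt0 n0 dn.
split.
  move=> k _; rewrite ram_val // prodf_seq_neq0; apply/allP => q.
  rewrite mem_primes => /and3P[pq _ _] /=.
  case: ifP => _; last by rewrite oppr_eq0 oner_eq0.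
  by rewrite pnatr_eq0 subn_eq0 -ltnNge prime_gt1.
move=> s.
pose H (q e : nat) : R[i] :=
  if q \in primes d then ((if (0 < e)%N then (q - 1)%:R else -1) ^+ s)^-1 else 1.
have hperm : perm_eq (primes d) [seq q <- primes n | q \in primes d].
  apply: uniq_perm; [exact: primes_uniq | by rewrite filter_uniq // primes_uniq |].
  move=> q; rewrite mem_filter; case qd: (q \in primes d) => //=.
  move: qd; rewrite !mem_primes => /and3P[-> _ qd]; rewrite n0 /=.
  by rewrite (dvdn_trans qd dn).
have key : forall k, k \in divisors n ->
    (ramanujan_sum d k ^+ s)^-1 = \prod_(q <- primes n) H q (logn q k).
  move=> k; rewrite -dvdn_divisors // => kn.
  have k0 : (0 < k)%N := dvdn_gt0 n0 kn.
  rewrite ram_val // -prodrXl -prodfV (perm_big _ hperm) big_filter big_mkcond.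
  apply: eq_big_seq => q qn; rewrite /H; case: ifP => qd //.
  move: qn; rewrite mem_primes => /and3P[pq _ _].
  by rewrite logn_gt0 mem_primes pq k0.
rewrite (eq_big_seq _ key) sum_divisors_prod //.
apply: eq_big_seq => q qn; rewrite /H.
case qd: (q \in primes d).
  have -> : logn q d = 1%N.
    by apply/eqP; rewrite eqn_leq sqf logn_gt0 qd.
  rewrite mul1n big_ord_recl /=.
  rewrite sumr_const card_ord addrC; congr (_ + _); last by rewrite -exprVn invrN1.
  by rewrite mulr_natl.
have -> : logn q d = 0%N by apply/eqP; rewrite eqn0Ngt logn_gt0 qd.
by rewrite mul0n !expr0 divr1 sumr_const card_ord natr1.
Qed.
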